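(* Let $\Gamma$ be a simplicial complex and $p\ge 0$ an integer with $\mathrm{gr}_p(\Gamma)<\infty$. Then $\mathrm{gr}_{p-k}(\Gamma)\le \mathrm{gr}_p(\Gamma)-k$ for all $0\le k\le p$.
   Context: A simplicial complex $\Gamma$ on a finite vertex set $V=V(\Gamma)$ is a family of subsets of $V$ (faces) closed under taking subsets. For $W\subseteq V$, $\Gamma[W]=\{F\in\Gamma:F\subseteq W\}$; for a face $F$ (possibly empty), $\mathrm{lk}_\Gamma(F)=\{G\setminus F: F\subseteq G\in\Gamma\}$. Fix a field $\mathbf{k}$; $\tilde H_j(\cdot;\mathbf{k})$ is reduced simplicial homology (so $\tilde H_{-1}$ of the empty complex $\{\emptyset\}$ is nonzero). For $q\ge 0$, the $(q-1)$-girth is $\mathrm{gr}_{q-1}(\Gamma)=\min\{|W|: W\subseteq V(\Gamma),\ \tilde H_{q-1}(\mathrm{lk}_\Gamma(F)[W];\mathbf{k})\neq 0 \text{ for some face } F\in\Gamma \text{ (including } F=\emptyset)\}$, or $\infty$ if none exists. *)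

(* Defs.v *)
From HB Require Import structures.
From mathcomp Require Import all_boot all_order all_algebra.
Set Implicit Arguments. Unset Strict Implicit. Unset Printing Implicit Defensive.
Import GRing.Theory.

Section SimplicialDefs.
Variable k : fieldType.
Variable V : finType.

Definition simplicial_complex (K : {set {set V}}) : Prop :=
  forall F G : {set V}, F \in K -> G \subset F -> G \in K.

Definition induced (K : {set {set V}}) (W : {set V}) : {set {set V}} :=
  [set G in K | G \subset W].

Definition link (K : {set {set V}}) (F : {set V}) : {set {set V}} :=
  [set G :\: F | G in [set G in K | F \subset G]].

(* Faces of K with exactly s vertices (= (s-1)-dimensional faces). *)
Definition faces (K : {set {set V}}) (s : nat) : {set {set V}} :=
  [set F in K | #|F| == s].

Definition bsign (G : {set V}) (v : V) : k :=
  ((-1) ^+ #|[set w in G | (enum_rank w < enum_rank v)%N]|)%R.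

(* Coefficient of G in the boundary of the oriented simplex F. *)
Definition bcoef (F G : {set V}) : k :=
  (if G \proper F then \sum_(v in F :\: G) bsign G v else 0)%R.

(* Matrix of the simplicial boundary map from the chains on faces with s
   vertices to chains on faces with s-1 vertices (row-vector convention:
   a chain c maps to c *m bd K s).  For s = 0 this is the zero map out of
   C_{-1} (no proper subsets among faces of size 0), and bd K 1 is the
   augmentation C_0 -> C_{-1} (reduced homology). *)
Definition bd (K : {set {set V}}) (s : nat)
  : 'M[k]_(#|faces K s|, #|faces K s.-1|) :=
  \matrix_(i, j) bcoef (enum_val i) (enum_val j).

(* Reduced homology H~_{s-1}(K; k) is nonzero: ker ∂ on C_{s-1} is not
   contained in im ∂ from C_s. *)
Definition rhom_nonzero (K : {set {set V}}) (s : nat) : bool :=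
  ~~ (kermx (bd K s) <= bd K s.+1)%MS.

(* Sets W witnessing gr_{q-1}: H~_{q-1}(lk_K(F)[W]) <> 0 for some face F. *)
Definition girth_set (K : {set {set V}}) (q : nat) : {set {set V}} :=
  [set W : {set V} | [exists F in K, rhom_nonzero (induced (link K F) W) q]].

(* girth K q = gr_{q-1}(K); None encodes infinity. *)
Definition girth (K : {set {set V}}) (q : nat) : option nat :=
  if [pick W in girth_set K q] is Some W0
  then Some #|[arg min_(W < W0 in girth_set K q) #|W| ]|
  else None.

End SimplicialDefs.

(* Main.v *)
Require Import Defs.
From HB Require Import structures.
From mathcomp Require Import all_boot all_order all_algebra.
From Stdlib Require Import Classical.
Set Implicit Arguments. Unset Strict Implicit. Unset Printing Implicit Defensive.
Import GRing.Theory.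


Section Girth.
Variable k : fieldType.
Variable V : finType.

Lemma girth_some (K : {set {set V}}) q n : girth k K q = Some n ->
  exists W, [/\ W \in girth_set k K q, #|W| = n &
     forall W', W' \in girth_set k K q -> n <= #|W'|].
Proof.
rewrite /girth; case: pickP => // W0 HW0 [<-].
case: arg_minnP => //= W HW Hmin; exists W; split => //.
Qed.

Lemma girth_le (K : {set {set V}}) q W : W \in girth_set k K q ->
  exists m, girth k K q = Some m /\ m <= #|W|.
Proof.
move=> HW; rewrite /girth; case: pickP => [W0 HW0|/(_ W)]; last by rewrite HW.
case: arg_minnP => //= W1 HW1 Hmin; eexists; split; first by [].
exact: Hmin.
Qed.
End Girth.


Section Trans.
Variable k : fieldType.
Variable V : finType.
Local Open Scope ring_scope.

Definition bdc (X : {set {set V}}) (s : nat) (c : {set V} -> k) (G : {set V}) : k :=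
  \sum_(F in faces X s) c F * bcoef k F G.

Definition Zc X s c := forall G, G \in faces X s.-1 -> bdc X s c G = 0.
Definition Bc X s c := exists d, forall G, G \in faces X s -> bdc X s.+1 d G = c G.
Definition NZ X s := exists c, Zc X s c /\ ~ Bc X s c.

Definition mkrow (X : {set {set V}}) s (c : {set V} -> k) : 'rV[k]_(#|faces X s|) :=
  \row_i c (enum_val i).
Definition unrow (X : {set {set V}}) s (u : 'rV[k]_(#|faces X s|)) (F : {set V}) : k :=
  \sum_i u 0 i * (enum_val i == F)%:R.

Lemma unrowK X s u : mkrow X s (unrow u) = u.
Proof.
apply/rowP => i; rewrite /mkrow /unrow mxE (bigD1 i) //= eqxx mulr1 big1 ?addr0 //.
move=> j /negbTE ji; rewrite (inj_eq enum_val_inj) ji mulr0 //.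
Qed.

Lemma mkrow_mul X s c (i0 : 'I_1) j :
  (mkrow X s c *m bd k X s) i0 j = bdc X s c (enum_val j).
Proof.
rewrite mxE /bdc [RHS]big_enum_val /=; by apply: eq_bigr => i _; rewrite !mxE.
Qed.

Lemma bdc_row X s c G (HG : G \in faces X s.-1) (i0 : 'I_1) :
  bdc X s c G = (mkrow X s c *m bd k X s) i0 (enum_rank_in HG G).
Proof. by rewrite mkrow_mul enum_rankK_in. Qed.

Lemma rhomP X s : rhom_nonzero k X s <-> NZ X s.
Proof.
split.
- move=> H; apply: NNPP => HN; move/negP: H; apply; apply/rV_subP => u Hu.
  apply: NNPP => Hnu; apply: HN; exists (unrow u); split.
  + move=> G HG; rewrite (bdc_row _ HG 0) unrowK.
    by move/sub_kermxP: Hu => ->; rewrite mxE.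
  + move=> [d Hd]; apply: Hnu; apply/submxP; exists (mkrow X s.+1 d).
    apply/rowP => i.
    transitivity (bdc X s.+1 d (enum_val i)); last first.
    by have E := @mkrow_mul X s.+1 d 0 i; rewrite E.
    rewrite Hd ?enum_valP //.
    by have H := @unrowK X s u; rewrite -{1}H mxE.
- move=> [c [Hz Hb]]; apply/negP => Hsub; apply: Hb.
  have : (mkrow X s c <= kermx (bd k X s))%MS.
    apply/sub_kermxP/rowP => j; rewrite mkrow_mul Hz ?enum_valP // mxE //.
  move=> /submx_trans /(_ Hsub) /submxP [D HD].
  exists (unrow D) => G HG; rewrite (@bdc_row X s.+1 _ G HG 0) unrowK -HD.
  by rewrite mxE enum_rankK_in.
Qed.
End Trans.


Section Signs.
Variable k : fieldType.
Variable V : finType.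
Local Open Scope ring_scope.

Lemma bsign_add (H : {set V}) v u : v \notin H ->
  bsign k (v |: H) u = bsign k H u * (-1) ^+ (enum_rank v < enum_rank u)%N.
Proof.
move=> vH; rewrite /bsign -exprD; congr (_ ^+ _).
case: (boolP (enum_rank v < enum_rank u)%N) => h.
- have -> : [set w in v |: H | (enum_rank w < enum_rank u)%N]
     = v |: [set w in H | (enum_rank w < enum_rank u)%N].
    by apply/setP => w; rewrite !inE; case: (eqVneq w v) => [->|]; rewrite ?h ?orbT.
  by rewrite cardsU1 inE (negbTE vH) /= addnC.
- have -> : [set w in v |: H | (enum_rank w < enum_rank u)%N]
     = [set w in H | (enum_rank w < enum_rank u)%N].
    apply/setP => w; rewrite !inE; case: (eqVneq w v) => [->|] //=.
    by rewrite (negbTE vH) (negbTE h).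
  by rewrite addn0.
Qed.

Lemma bcoef_add1 (H : {set V}) u : u \notin H -> bcoef k (u |: H) H = bsign k H u.
Proof.
move=> uH; rewrite /bcoef.
have -> : H \proper u |: H.
  by rewrite properEneq subsetUr andbT; apply/eqP => E; move: uH; rewrite {1}E setU11.
have -> : (u |: H) :\: H = [set u].
  apply/setP => w; rewrite !inE; case: (eqVneq w u) => [->|] /=; first by rewrite uH.
  by case: (w \in H).
by rewrite big_set1.
Qed.

Lemma bcoef_nsub (G H : {set V}) : ~~ (H \subset G) -> bcoef k G H = 0.
Proof.
move=> nHG; rewrite /bcoef; case: ifP => // /properP [] HG; by rewrite HG in nHG.
Qed.

Lemma codim1 (G H : {set V}) : #|G| = #|H|.+1 -> H \subset G ->
  exists u, u \notin H /\ G = u |: H.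
Proof.
move=> cG HG.
have : #|G :\: H| == 1%N.
  by rewrite cardsD (setIidPr HG) cG subSnn.
move/cards1P => [u Hu]; exists u.
have uGH : u \in G :\: H by rewrite Hu set11.
split; first by move: uGH; rewrite inE => /andP [].
apply/setP => w; rewrite !inE; apply/idP/idP.
- move=> wG; apply/orP; case: (boolP (w \in H)) => wH; first by right.
  left.
  have : w \in G :\: H by rewrite inE wH.
  by rewrite Hu inE => ->.
- case/orP => [/eqP ->|wH]; last exact: (subsetP HG).
  by move: uGH; rewrite inE => /andP [].
Qed.

Lemma sign_swap (H : {set V}) a b : a != b -> a \notin H -> b \notin H ->
  bsign k (a |: H) b * bsign k H a = - (bsign k (b |: H) a * bsign k H b).
Proof.
move=> ab aH bH; rewrite !bsign_add //.
case: ltngtP => h.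
- rewrite /= expr1 expr0 mulr1 mulrN1 mulNr; congr (- _); exact: mulrC.
- rewrite /= expr1 expr0 mulr1 mulrN1 mulNr opprK; exact: mulrC.
- by move/enum_rank_inj: (val_inj h) => E; rewrite E eqxx in ab.
Qed.
End Signs.


Section DD.
Variable k : fieldType.
Variable V : finType.
Local Open Scope ring_scope.

Lemma ident (G H : {set V}) v : v \notin G -> v \notin H -> #|G| = #|H|.+1 ->
  bsign k G v * bcoef k G H = - (bsign k H v * bcoef k (v |: G) (v |: H)).
Proof.
move=> vG vH cG; case: (boolP (H \subset G)) => HG.
- have [u [uH EG]] := codim1 cG HG; subst G.
  have uv : u != v by apply/eqP => E; move: vG; rewrite -E !inE eqxx.
  have uvH : u \notin v |: H by rewrite !inE negb_or uv.
  rewrite setUCA !bcoef_add1 //.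
  rewrite sign_swap //; congr (- _); exact: mulrC.
- rewrite !bcoef_nsub ?mulr0 ?oppr0 //.
  apply/negP => /subsetP sub; move/negP: HG; apply; apply/subsetP => x xH.
  have := sub x; rewrite !inE xH orbT => /(_ isT) /orP [/eqP E|//].
  by move: vH; rewrite -E xH.
Qed.

Lemma ddin (X : {set {set V}}) (hX : forall F G : {set V}, F \in X -> G \subset F -> G \in X)
  (F2 H : {set V}) : F2 \in X -> #|F2| = #|H|.+2 ->
  \sum_(F in faces X #|H|.+1) bcoef k F2 F * bcoef k F H = 0.
Proof.
move=> F2X cF2.
case: (boolP (H \subset F2)) => HF2; last first.
  apply: big1 => F _; case: (boolP (H \subset F)) => HF; last by rewrite [bcoef k F H]bcoef_nsub ?mulr0.
  rewrite bcoef_nsub ?mul0r //; apply/negP => FF2; move/negP: HF2; apply.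
  exact: subset_trans FF2.
have : #|F2 :\: H| == 2%N by rewrite cardsD (setIidPr HF2) cF2 -addn2 addKn.
case/cards2P => [a [b [ab Eab]]].
have aF2 : a \in F2 :\: H by rewrite Eab !inE eqxx.
have bF2 : b \in F2 :\: H by rewrite Eab !inE eqxx orbT.
move: (aF2) (bF2); rewrite !inE => /andP [aH aF] /andP [bH bF].
have EF2 : F2 = a |: (b |: H).
  apply/setP => x; rewrite !inE; apply/idP/idP.
  - move=> xF; case: (boolP (x \in H)) => xH; first by rewrite !orbT.
    have : x \in F2 :\: H by rewrite inE xH.
    by rewrite Eab !inE orbF.
  - by move=> /orP [/eqP ->|/orP [/eqP ->|/(subsetP HF2)]].
have cH1 : forall u, u \notin H -> #|u |: H| = #|H|.+1.
  by move=> u uH; rewrite cardsU1 uH.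
have Fa : a |: H \in faces X #|H|.+1.
  rewrite inE cH1 // eqxx andbT; apply: hX F2X _.
  by rewrite EF2 setUCA subsetUr.
have Fb : b |: H \in faces X #|H|.+1.
  rewrite inE cH1 // eqxx andbT; apply: hX F2X _.
  by rewrite EF2 subsetUr.
have neab : b |: H != a |: H.
  apply/eqP => E; have : b \in a |: H by rewrite -E setU11.
  by rewrite !inE (negbTE bH) orbF eq_sym (negbTE ab).
rewrite (bigD1 (a |: H)) //= (bigD1 (b |: H)) /=; last by rewrite Fb neab.
rewrite big1 ?addr0.
- have bAH : b \notin a |: H by rewrite !inE (negbTE bH) orbF eq_sym.
  have aBH : a \notin b |: H by rewrite !inE (negbTE aH) orbF.
  rewrite {1}EF2 setUCA (@bcoef_add1 _ _ _ _ bAH) EF2 (@bcoef_add1 _ _ _ _ aBH).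
  by rewrite (@bcoef_add1 _ _ H a aH) (@bcoef_add1 _ _ H b bH) sign_swap // addNr.
- move=> F /andP [/andP [FX nFa] nFb].
  case: (boolP (H \subset F)) => HF; last by rewrite [bcoef k F H]bcoef_nsub ?mulr0.
  have cF : #|F| = #|H|.+1 by move: FX; rewrite inE => /andP [_ /eqP].
  have [u [uH EF]] := codim1 cF HF.
  case: (boolP (F \subset F2)) => FF2; last by rewrite bcoef_nsub ?mul0r.
  have : u \in F2 :\: H by rewrite inE uH (subsetP FF2) // EF setU11.
  rewrite Eab !inE => /orP [] /eqP Eu.
  + by move: nFa; rewrite EF Eu eqxx.
  + by move: nFb; rewrite EF Eu eqxx.
Qed.
End DD.


Section Mem.
Variable V : finType.
Variable K : {set {set V}}.

Lemma disjP (G F : {set V}) x : G :&: F == set0 -> x \in G -> x \notin F.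
Proof. by move/eqP/setP/(_ x); rewrite !inE => E xG; move: E; rewrite xG /= => ->. Qed.

Lemma mem_link (F G : {set V}) :
  (G \in link K F) = (G :&: F == set0) && (G :|: F \in K).
Proof.
apply/imsetP/andP.
- move=> [A]; rewrite inE => /andP [AK FA] ->; split.
  + by apply/eqP/setP => x; rewrite !inE; case: (x \in F); rewrite ?andbF.
  + suff -> : A :\: F :|: F = A by [].
    apply/setP => x; rewrite !inE; case: (boolP (x \in F)) => xF /=.
    * by rewrite (subsetP FA).
    * by rewrite orbF.
- move=> [dis GFK]; exists (G :|: F); first by rewrite inE GFK subsetUr.
  apply/setP => x; rewrite !inE; case: (boolP (x \in G)) => xG /=.
  + by rewrite (disjP dis xG).
  + by rewrite andNb.
Qed.
End Mem.

Section Step.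
Variable k : fieldType.
Variable V : finType.
Variable K : {set {set V}}.
Hypothesis hK : simplicial_complex K.
Variables (F W : {set V}) (v : V).
Hypotheses (vW : v \in W) (vF : v \notin F).

Local Notation L := (induced (link K F) W).
Local Notation L0 := (induced (link K F) (W :\ v)).
Local Notation L1 := (induced (link K (v |: F)) (W :\ v)).

Lemma setI1_eq0 (G : {set V}) x : (G :&: [set x] == set0) = (x \notin G).
Proof.
apply/idP/idP => [/eqP/setP/(_ x)|xG]; first by rewrite !inE eqxx andbT => ->.
by apply/eqP/setP => y; rewrite !inE; case: (eqVneq y x) => [->|]; rewrite ?(negbTE xG) ?andbF.
Qed.

Lemma set1I_eq0 (G : {set V}) x : ([set x] :&: G == set0) = (x \notin G).
Proof. by rewrite setIC setI1_eq0. Qed.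

Lemma memL G : (G \in L) = [&& G :&: F == set0, G :|: F \in K & G \subset W].
Proof. by rewrite /induced inE mem_link andbA. Qed.

Lemma closedL (A B : {set V}) : A \in L -> B \subset A -> B \in L.
Proof.
rewrite !memL => /and3P [dA AK AW] BA; apply/and3P; split.
- apply/eqP/setP => x; rewrite !inE; apply/negbTE; apply/andP => [[xB xF]].
  by move: (disjP dA (subsetP BA x xB)); rewrite xF.
- by apply: hK AK _; apply: setSU.
- exact: subset_trans BA AW.
Qed.

Lemma memL0 G : (G \in L0) = (G \in L) && (v \notin G).
Proof. by rewrite /induced !inE subsetD1 andbA. Qed.

Lemma memL1 G : (G \in L1) = (v \notin G) && (v |: G \in L).
Proof.
rewrite /induced inE mem_link memL subsetD1 setIUr setU_eq0 setI1_eq0.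
rewrite setIUl setU_eq0 set1I_eq0 vF /= setUCA setUA subUset sub1set vW /=.
by case: (v \in G); case: (G :&: F == set0); case: (_ \in K); case: (G \subset W).
Qed.

Lemma mem_faces (X : {set {set V}}) s G : (G \in faces X s) = (G \in X) && (#|G| == s).
Proof. by rewrite /faces inE. Qed.

Lemma facesL0 G s : (G \in faces L0 s) = (G \in faces L s) && (v \notin G).
Proof. by rewrite !mem_faces memL0; case: (G \in L); case: (v \in G); case: (#|G| == s). Qed.

Lemma facesL1 G s : (G \in faces L1 s) = (v \notin G) && (v |: G \in faces L s.+1).
Proof.
rewrite !mem_faces memL1 cardsU1.
by case: (boolP (v \in G)) => //= vG; rewrite andbC.
Qed.

Local Open Scope ring_scope.

Lemma split_sum (f : {set V} -> k) s :
  \sum_(A in faces L s) f A =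
  \sum_(A in faces L s | v \in A) f A + \sum_(A in faces L0 s) f A.
Proof.
rewrite (bigID (fun A : {set V} => v \in A)) /=; congr (_ + _).
by apply: eq_bigl => A; rewrite facesL0.
Qed.

Lemma reindex_v (f : {set V} -> k) s :
  \sum_(A in faces L s.+1 | v \in A) f A = \sum_(G in faces L1 s) f (v |: G).
Proof.
rewrite (reindex_onto (fun G => v |: G) (fun A => A :\ v)) /=; last first.
  by move=> A /andP [_ vA]; rewrite setD1K.
apply: eq_bigl => G; rewrite facesL1 setU11 andbT.
case: (boolP (v \in G)) => vG /=.
- have -> : ((v |: G) :\ v == G) = false.
    by apply/negbTE/eqP => E; move: vG; rewrite -E setD11.
  by rewrite andbF.
- by rewrite setU1K // eqxx andbT.
Qed.

Lemma bdc_v (c : {set V} -> k) s (H : {set V}) : v \notin H ->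
  bdc L s.+1 c (v |: H) = \sum_(G in faces L1 s) c (v |: G) * bcoef k (v |: G) (v |: H).
Proof.
move=> vH; rewrite /bdc split_sum reindex_v [X in _ + X]big1 ?addr0 //.
move=> A; rewrite facesL0 => /andP [_ vA]; rewrite bcoef_nsub ?mulr0 //.
by apply/negP => /subsetP /(_ v); rewrite setU11 (negbTE vA) => /(_ isT).
Qed.

Lemma dd0 (X : {set {set V}}) (hX : forall A B : {set V}, A \in X -> B \subset A -> B \in X)
  (D : {set V} -> k) (H : {set V}) :
  \sum_(A in faces X #|H|.+1) bdc X #|H|.+2 D A * bcoef k A H = 0.
Proof.
rewrite /bdc (eq_bigr (fun A => \sum_(F0 in faces X #|H|.+2) D F0 * bcoef k F0 A * bcoef k A H)); last by move=> A _; rewrite big_distrl.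
rewrite exchange_big /=; apply: big1 => F2; rewrite mem_faces => /andP [F2X /eqP cF2].
rewrite -[RHS](mulr0 (D F2)) -[in RHS](ddin k hX F2X cF2) big_distrr; apply: eq_bigr => A _.
by rewrite /= mulrA.
Qed.

Lemma claimA (q : nat) (hq : (0 < q)%N) (c : {set V} -> k) :
  Zc L q.+1 c -> Zc L1 q (fun G => c (v |: G) * bsign k G v).
Proof.
move=> Hz H; rewrite facesL1 => /andP [vH HH].
have cH : #|H| = q.-1 by move: HH; rewrite mem_faces cardsU1 vH add1n eqSS => /andP [_ /eqP].
transitivity (- bsign k H v * bdc L q.+1 c (v |: H)); last first.
  by rewrite Hz ?mulr0 // -(prednK hq).
rewrite (bdc_v c q vH) /bdc big_distrr; apply: eq_bigr => G; rewrite facesL1 => /andP [vG GG].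
have cG : #|G| = #|H|.+1.
  by move: GG; rewrite mem_faces cardsU1 vG add1n eqSS cH prednK // => /andP [_ /eqP].
rewrite -mulrA ident // /= mulrN mulNr; congr (- _); exact: mulrCA.
Qed.

Lemma bsq (G : {set V}) x : bsign k G x * bsign k G x = 1.
Proof. by rewrite /bsign -expr2 sqrr_sign. Qed.

Lemma bdcD (X : {set {set V}}) s (f g : {set V} -> k) G :
  bdc X s (fun A => f A + g A) G = bdc X s f G + bdc X s g G.
Proof. by rewrite /bdc -big_split; apply: eq_bigr => A _; rewrite mulrDl. Qed.

Lemma card_L1 (G : {set V}) s : G \in faces L1 s -> #|G| = s.
Proof. by rewrite facesL1 => /andP [vG]; rewrite mem_faces cardsU1 vG add1n eqSS => /andP [_ /eqP]. Qed.

Lemma claimB (q : nat) (hq : (0 < q)%N) (c : {set V} -> k) :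
  Zc L q.+1 c -> ~ Bc L q.+1 c -> ~ NZ k L0 q.+1 ->
  ~ Bc L1 q (fun G => c (v |: G) * bsign k G v).
Proof.
move=> Hz Hnb Hmin [d Hd].
pose D := fun A : {set V} => - (d (A :\ v) * bsign k (A :\ v) v).
have B1 : forall A, A \in faces L q.+1 -> v \in A -> bdc L q.+2 D A = c A.
  move=> A AF vA; pose G := A :\ v.
  have EA : A = v |: G by rewrite /G setD1K.
  have vG : v \notin G by rewrite /G setD11.
  have GF : G \in faces L1 q by rewrite facesL1 vG -EA.
  rewrite EA (bdc_v D q.+1 vG).
  transitivity (bsign k G v * bdc L1 q.+1 d G).
    rewrite /bdc big_distrr; apply: eq_bigr => G2 G2F.
    have vG2 : v \notin G2 by move: G2F; rewrite facesL1 => /andP [].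
    have cG2 : #|G2| = #|G|.+1 by rewrite (card_L1 G2F) (card_L1 GF).
    have E := ident k vG2 vG cG2.
    have E2 : bcoef k (v |: G2) (v |: G) = - (bsign k G v * (bsign k G2 v * bcoef k G2 G)).
      by rewrite E mulrN mulrA bsq mul1r opprK.
    rewrite /D setU1K // E2 mulrNN /=.
    rewrite mulrCA; congr (_ * _).
    by rewrite -mulrA (mulrA (bsign k G2 v)) bsq mul1r.
  by rewrite Hd // mulrCA bsq mulr1.
pose y := fun A => c A - bdc L q.+2 D A.
have Zy : Zc L0 q.+1 y.
  move=> H /=; rewrite facesL0 => /andP [HF vH].
  have cH : #|H| = q by move: HF; rewrite mem_faces => /andP [_ /eqP].
  transitivity (\sum_(A in faces L q.+1) y A * bcoef k A H).
    rewrite split_sum big1 ?add0r // => A /andP [AF vA].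
    by rewrite /y B1 // subrr mul0r.
  rewrite /y; under eq_bigr => A _ do rewrite mulrBl.
  rewrite sumrB; have := Hz H HF; rewrite /bdc => ->.
  have := dd0 closedL D H; rewrite cH => ->.
  by rewrite subrr.
have [e He] : Bc L0 q.+1 y.
  by apply: NNPP => nb; apply: Hmin; exists y; split.
apply: Hnb; exists (fun A => D A + (if v \in A then 0 else e A)).
move=> A AF; rewrite bdcD.
have -> : bdc L q.+2 (fun A => if v \in A then 0 else e A) A = bdc L0 q.+2 e A.
  rewrite /bdc split_sum big1 ?add0r; last by move=> A2 /andP [_ ->]; rewrite mul0r.
  apply: eq_bigr => A2; rewrite facesL0 => /andP [_ vA2]; by rewrite (negbTE vA2).
case: (boolP (v \in A)) => vA.
- rewrite B1 // /bdc big1 ?addr0 // => A2; rewrite facesL0 => /andP [_ vA2].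
  rewrite bcoef_nsub ?mulr0 //; apply/negP => /subsetP /(_ v vA).
  by rewrite (negbTE vA2).
- rewrite He; first by rewrite /y subrKC.
  by rewrite facesL0 AF.
Qed.
End Step.


Lemma step (k : fieldType) (V : finType) (K : {set {set V}})
  (hK : simplicial_complex K) (q n : nat) (hq : 0 < q) :
  girth k K q.+1 = Some n -> exists m, girth k K q = Some m /\ m <= n.-1.
Proof.
case/girth_some => W [WG cW Hmin].
move: WG; rewrite inE => /exists_inP [F FK Hrh].
have [c [Hz Hnb]] := (rhomP _ _ _).1 Hrh.
have [A [AF cA]] : exists A, A \in faces (induced (link K F) W) q.+1 /\ c A <> 0%R.
  apply: NNPP => H; apply: Hnb; exists (fun _ => 0%R) => G GF.
  rewrite /bdc big1 => [|A _]; last by rewrite GRing.mul0r.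
  apply: esym; apply: NNPP => cG; apply: H; exists G; split => //.
move: AF; rewrite mem_faces memL => /andP [/and3P [dA AFK AW] /eqP cAq].
have : (0 < #|A|)%N by rewrite cAq.
case/card_gt0P => v vA.
have vW : v \in W by exact: (subsetP AW).
have vF : v \notin F by exact: disjP dA vA.
have vFK : v |: F \in K.
  apply: hK AFK _; apply/subsetP => x; rewrite !inE => /orP [/eqP ->|xF].
  - by rewrite vA.
  - by rewrite xF orbT.
have cWv : #|W| = (#|W :\ v|).+1 by rewrite (cardsD1 v W) vW.
have Hmin' : ~ NZ k (induced (link K F) (W :\ v)) q.+1.
  move=> HN; have : W :\ v \in girth_set k K q.+1.
    by rewrite inE; apply/exists_inP; exists F => //; apply/rhomP.
  move/Hmin; rewrite -cW cWv ltnn //.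
have HNZ : NZ k (induced (link K (v |: F)) (W :\ v)) q.
  exists (fun G => (c (v |: G) * bsign k G v)%R); split.
  - exact (claimA vW vF hq Hz).
  - exact (claimB hK vW vF hq Hz Hnb Hmin').
have : W :\ v \in girth_set k K q.
  by rewrite inE; apply/exists_inP; exists (v |: F) => //; apply/rhomP.
case/girth_le => m [Hm mle]; exists m; split => //.
by rewrite -cW cWv.
Qed.

Unset Implicit Arguments.
Theorem mainTheorem11 (k : fieldType) (V : finType) (K : {set {set V}})
  (hK : simplicial_complex K) (p n : nat)
  (hp : girth k K p.+1 = Some n) :
  forall j : nat, j <= p ->
    exists m : nat, girth k K (p - j).+1 = Some m /\ m <= n - j.
Proof.
elim=> [|j IH] hj; first by exists n; rewrite !subn0.
have [m [Hm mle]] := IH (ltnW hj).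
have hq : 0 < p - j by rewrite subn_gt0.
have [m' [Hm' m'le]] := step hK hq Hm.
exists m'; split.
- by rewrite subnS prednK.
- rewrite subnS; apply: leq_trans m'le _. by rewrite -!subn1 leq_sub2r.
Qed.
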